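(* Let $d\ge1$, $s\in[0,d]$, and let $E\subset\mathbb R^d$ be a nonempty bounded Borel set with $\varphi^s(E)>0$. Let $\eta\in(0,1)$ and let $\mu_\eta$ be a Borel probability measure with $\mu_\eta(\mathbb R^d\setminus E)=0$ such that \[ \inf_{x\in E}\inf_{r>0}\frac{r^s}{\mu_\eta(B_r(x))}>\varphi^s(E)(1-\eta). \] Let $\varepsilon>0$ and let $A$ be the set of points $x\in E$ such that for all $y\in E$ and $r>0$ with $x\in B_r(y)$ one has $\mu_\eta(B_r(y))<(1-\varepsilon)r^s/\varphi^s(E)$. Then \[ \mathcal H^s_\infty(A)\le \frac{\varphi^s(E)}{c_d\,(1-\varepsilon+\varepsilon/\eta)}. \]
   Context: $B_r(x)$ denotes the open ball in $\mathbb R^d$ of center $x$ and radius $r$. For a Borel set $E\subset\mathbb R^d$ and $s\ge 0$, $\varphi^s(E)=\sup_\mu \inf_{x\in E}\inf_{r>0} r^s/\mu(B_r(x))$, the supremum over Borel probability measures $\mu$ with $\mu(\mathbb R^d\setminus E)=0$. $\mathcal H^s_\infty$ is the $s$-dimensional Hausdorff content (infimum of $\sum(\operatorname{diam}D_i)^s$ over countable covers by balls) and $\mathcal H^s$ the $s$-dimensional Hausdorff measure. $c_d>0$ is a constant depending only on $d$ such that (Frostman's lemma) for every bounded Borel set $K\subset\mathbb R^d$ with $\mathcal H^s(K)>0$ there is a Borel probability measure $m$ with $m(\mathbb R^d\setminus K)=0$ and $m(B_r(x))\le r^s/(c_d\mathcal H^s_\infty(K))$ for all $x\in\mathbb R^d$,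 $r>0$. *)

(* Defs.v *)
From Stdlib Require Import Reals Lra.
Open Scope R_scope.

(* Points of R^d: real sequences vanishing from index d on. *)
Definition pt (d : nat) : Type := {x : nat -> R | forall i, (d <= i)%nat -> x i = 0}.

Fixpoint sumsq (n : nat) (x y : nat -> R) : R :=
  match n with
  | O => 0
  | S k => sumsq k x y + (x k - y k) ^ 2
  end.

Definition dist {d : nat} (x y : pt d) : R :=
  sqrt (sumsq d (proj1_sig x) (proj1_sig y)).

Definition set (d : nat) := pt d -> Prop.

Definition ball {d : nat} (x : pt d) (r : R) : set d := fun y => dist x y < r.

Definition setC {d : nat} (A : set d) : set d := fun x => ~ A x.

Definition is_open {d : nat} (U : set d) : Prop :=
  forall x, U x -> exists e, 0 < e /\ forall y, dist x y < e -> U y.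

Inductive borel {d : nat} : set d -> Prop :=
  | borel_open : forall U, is_open U -> borel U
  | borel_compl : forall A, borel A -> borel (setC A)
  | borel_union : forall A : nat -> set d, (forall n, borel (A n)) ->
      borel (fun x => exists n, A n x).

Definition bdd_set {d : nat} (E : set d) : Prop :=
  exists x0 R0, forall x, E x -> dist x0 x <= R0.

(* Borel probability measure (values on non-Borel sets are irrelevant) *)
Definition prob_measure {d : nat} (mu : set d -> R) : Prop :=
  (forall A, borel A -> 0 <= mu A) /\
  mu (fun _ => True) = 1 /\
  (forall A : nat -> set d, (forall n, borel (A n)) ->
     (forall m n x, m <> n -> A m x -> A n x -> False) ->
     infinite_sum (fun n => mu (A n)) (mu (fun x => exists n, A n x))).

(* c is a lower bound of { r^s / mu(B_r(x)) : x in E, r > 0 }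
   (with the convention r^s/0 = +infinity) *)
Definition ratio_lowb {d : nat} (s : R) (E : set d) (mu : set d -> R) (c : R) : Prop :=
  forall x r, E x -> 0 < r -> c * mu (ball x r) <= Rpower r s.

(* q = inf_{x in E} inf_{r>0} r^s / mu(B_r(x)) *)
Definition ratio_inf {d : nat} (s : R) (E : set d) (mu : set d -> R) (q : R) : Prop :=
  is_lub (ratio_lowb s E mu) q.

(* p = phi^s(E) = sup over Borel probability measures on E of ratio_inf *)
Definition is_phi {d : nat} (s : R) (E : set d) (p : R) : Prop :=
  is_lub (fun q => exists mu, prob_measure mu /\ mu (setC E) = 0 /\ ratio_inf s E mu q) p.

Definition is_glb (S : R -> Prop) (m : R) : Prop :=
  (forall v, S v -> m <= v) /\ (forall m', (forall v, S v -> m' <= v) -> m' <= m).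

(* (diam B_r(x))^s = (2r)^s, with diam(empty)^s = 0 for r = 0 *)
Definition contrib (s r : R) : R := if Rle_dec r 0 then 0 else Rpower (2 * r) s.

Definition cover_val {d : nat} (s delta : R) (A : set d) (v : R) : Prop :=
  exists (c : nat -> pt d) (r : nat -> R),
    (forall n, 0 <= r n /\ 2 * r n <= delta) /\
    (forall x, A x -> exists n, ball (c n) (r n) x) /\
    infinite_sum (fun n => contrib s (r n)) v.

Definition cover_val_inf {d : nat} (s : R) (A : set d) (v : R) : Prop :=
  exists (c : nat -> pt d) (r : nat -> R),
    (forall n, 0 <= r n) /\
    (forall x, A x -> exists n, ball (c n) (r n) x) /\
    infinite_sum (fun n => contrib s (r n)) v.

Definition is_Hcontent {d : nat} (s : R) (A : set d) (h : R) : Prop :=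
  is_glb (cover_val_inf s A) h.

(* H^s(A) > 0, i.e. H^s_delta(A) > 0 for some delta > 0 *)
Definition Hmeas_pos {d : nat} (s : R) (A : set d) : Prop :=
  exists delta e, 0 < delta /\ 0 < e /\ forall v, cover_val s delta A v -> e <= v.

Definition frostman_const (d : nat) (c : R) : Prop :=
  forall (s : R) (K : set d), 0 <= s <= INR d -> borel K -> bdd_set K -> Hmeas_pos s K ->
    forall h, is_Hcontent s K h ->
      exists m : set d -> R, prob_measure m /\ m (setC K) = 0 /\
        forall x r, 0 < r -> m (ball x r) <= Rpower r s / (c * h).

(* Main.v *)
Require Import Defs.
From Stdlib Require Import Reals Lra Psatz Classical FunctionalExtensionality PropExtensionality.
Open Scope R_scope.

Lemma sumsq_ge0 n x y : 0 <= sumsq n x y.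
Proof. induction n; simpl; [lra| pose proof (pow2_ge_0 (x n - y n)); lra]. Qed.

Lemma sumsq_sym n x y : sumsq n x y = sumsq n y x.
Proof. induction n; simpl; [reflexivity| rewrite IHn; ring]. Qed.

Lemma ddist_sym {d} (x y : pt d) : Defs.dist x y = Defs.dist y x.
Proof. unfold Defs.dist; rewrite sumsq_sym; reflexivity. Qed.

Lemma ddist_ge0 {d} (x y : pt d) : 0 <= Defs.dist x y.
Proof. unfold Defs.dist; apply sqrt_pos. Qed.

Lemma sqrt_tri n x y z :
  sqrt (sumsq n x y) <= sqrt (sumsq n x z) + sqrt (sumsq n z y).
Proof.
  induction n as [|n IH]; simpl.
  - rewrite sqrt_0; lra.
  - set (S := sumsq n x y) in *; set (Sa := sumsq n x z) in *; set (Sb := sumsq n z y) in *.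
    assert (HS : 0 <= S) by apply sumsq_ge0.
    assert (HSa : 0 <= Sa) by apply sumsq_ge0.
    assert (HSb : 0 <= Sb) by apply sumsq_ge0.
    set (a := x n - z n); set (b := z n - y n).
    replace (x n - y n) with (a + b) by (unfold a, b; ring).
    set (u := sqrt Sa) in *; set (v := sqrt Sb) in *.
    assert (Hu : 0 <= u) by apply sqrt_pos.
    assert (Hv : 0 <= v) by apply sqrt_pos.
    assert (Hu2 : u * u = Sa) by (apply sqrt_sqrt; lra).
    assert (Hv2 : v * v = Sb) by (apply sqrt_sqrt; lra).
    assert (HS2 : sqrt S * sqrt S = S) by (apply sqrt_sqrt; lra).
    assert (HS0 : 0 <= sqrt S) by apply sqrt_pos.
    assert (HSle : S <= (u + v) * (u + v)) by nra.
    set (P := sqrt (Sa + a ^ 2)); set (Q := sqrt (Sb + b ^ 2)).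
    assert (HP : 0 <= P) by apply sqrt_pos.
    assert (HQ : 0 <= Q) by apply sqrt_pos.
    assert (HP2 : P * P = Sa + a ^ 2) by (apply sqrt_sqrt; nra).
    assert (HQ2 : Q * Q = Sb + b ^ 2) by (apply sqrt_sqrt; nra).
    assert (HPQ : u * v + a * b <= P * Q).
    { assert ((u*v + a*b) * (u*v+a*b) <= (P*Q)*(P*Q)).
      { replace ((P*Q)*(P*Q)) with ((P*P)*(Q*Q)) by ring. rewrite HP2, HQ2, <- Hu2, <- Hv2. pose proof (pow2_ge_0 (u*b - a*v)); nra. }
      assert (0 <= P * Q) by nra. nra. }
    replace ((a + b) * ((a + b) * 1)) with ((a+b)^2) by ring.
    replace (a * (a * 1)) with (a^2) by ring.
    replace (b * (b * 1)) with (b^2) by ring.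
    fold P Q.
    apply Rle_trans with (sqrt ((P+Q)*(P+Q))).
    + apply sqrt_le_1_alt. nra.
    + rewrite sqrt_square by lra. lra.
Qed.

Lemma ddist_tri {d} (x y z : pt d) : Defs.dist x y <= Defs.dist x z + Defs.dist z y.
Proof. unfold Defs.dist; apply sqrt_tri. Qed.

Lemma set_ext {d} (A B : set d) : (forall x, A x <-> B x) -> A = B.
Proof. intro H; apply functional_extensionality; intro x; apply propositional_extensionality; auto. Qed.

Lemma borel_ext {d} (A B : set d) : borel A -> (forall x, A x <-> B x) -> borel B.
Proof. intros HA H; rewrite <- (set_ext A B H); exact HA. Qed.

Lemma borel_empty {d} : borel (fun _ : pt d => False).
Proof. apply borel_open; intros x []. Qed.

Lemma borel_union2 {d} (A B : set d) : borel A -> borel B -> borel (fun x => A x \/ B x).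
Proof.
  intros HA HB.
  apply borel_ext with (fun x => exists n, (match n with O => A | _ => B end) x).
  - apply borel_union; intros [|n]; auto.
  - intro x; split.
    + intros [[|n] H]; auto.
    + intros [H|H]; [exists O | exists 1%nat]; auto.
Qed.

Lemma borel_setC {d} (A : set d) : borel A -> borel (setC A).
Proof. apply borel_compl. Qed.

Lemma borel_inter {d} (A B : set d) : borel A -> borel B -> borel (fun x => A x /\ B x).
Proof.
  intros HA HB.
  apply borel_ext with (setC (fun x => setC A x \/ setC B x)).
  - apply borel_compl, borel_union2; apply borel_compl; auto.
  - intro x; unfold setC; split.
    + intro H; split; apply NNPP; intro; apply H; auto.
    + intros [H1 H2] [H|H]; auto.
Qed.

Lemma sum_eventually (F : nat -> R) (L : R) (N : nat) :
  (forall n, (n >= N)%nat -> sum_f_R0 F n = L) -> infinite_sum F L.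
Proof.
  intros H eps Heps; exists N; intros n Hn; rewrite H by exact Hn.
  unfold Rdist; rewrite Rminus_diag, Rabs_R0; lra.
Qed.

Section Meas.
Context {d : nat} (mu : set d -> R) (Hmu : prob_measure mu).

Lemma mu_ext (A B : set d) : (forall x, A x <-> B x) -> mu A = mu B.
Proof. intro H; rewrite (set_ext A B H); reflexivity. Qed.

Lemma mu_empty : mu (fun _ => False) = 0.
Proof.
  destruct Hmu as [_ [_ Hadd]].
  specialize (Hadd (fun _ => fun _ => False) (fun _ => borel_empty) (fun _ _ _ _ H _ => H)). cbv beta in Hadd.
  rewrite (mu_ext (fun x => exists n : nat, False) (fun _ => False)) in Hadd
    by (intro x; split; [intros [_ []] | intros []]).
  set (c := mu (fun _ => False)) in *.
  destruct (Req_dec c 0) as [|Hc]; auto.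
  exfalso.
  destruct (Hadd (Rabs c / 2)) as [N HN]. { pose proof (Rabs_pos_lt c Hc); lra. }
  specialize (HN (S N) ltac:(lia)).
  rewrite sum_cte in HN. unfold Rdist in HN.
  replace (c * INR (S (S N)) - c) with (c * INR (S N)) in HN
    by (rewrite (S_INR (S N)); ring).
  rewrite Rabs_mult, (Rabs_right (INR (S N))) in HN by (apply Rle_ge, pos_INR).
  rewrite S_INR in HN. pose proof (pos_INR N). pose proof (Rabs_pos_lt c Hc). nra.
Qed.

Lemma mu_add2 (A B : set d) : borel A -> borel B -> (forall x, A x -> B x -> False) ->
  mu (fun x => A x \/ B x) = mu A + mu B.
Proof.
  intros HA HB Hdis.
  destruct Hmu as [_ [_ Hadd]].
  set (F := fun n : nat => match n with O => A | 1%nat => B | _ => fun _ => False end).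
  assert (HF : forall n, borel (F n)) by (intros [|[|n]]; simpl; auto using borel_empty).
  assert (HD : forall m n x, m <> n -> F m x -> F n x -> False).
  { intros [|[|m]] [|[|n]] x Hmn; simpl; try tauto; try (intros; eauto); lia. }
  specialize (Hadd F HF HD).
  rewrite (mu_ext (fun x => exists n, F n x) (fun x => A x \/ B x)) in Hadd.
  2:{ intro x; split.
      - intros [[|[|n]] H]; simpl in H; tauto.
      - intros [H|H]; [exists O | exists 1%nat]; auto. }
  apply (uniqueness_sum _ _ _ Hadd).
  apply sum_eventually with 1%nat.
  intros n Hn; induction n as [|n IH]; [lia|].
  destruct n as [|n].
  - simpl. ring.
  - rewrite tech5, IH by lia. simpl. rewrite mu_empty. ring.
Qed.

Lemma mu_ge0 (A : set d) : borel A -> 0 <= mu A.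
Proof. apply Hmu. Qed.

Lemma mu_mono (A B : set d) : borel A -> borel B -> (forall x, A x -> B x) -> mu A <= mu B.
Proof.
  intros HA HB Hsub.
  rewrite (mu_ext B (fun x => A x \/ (B x /\ setC A x))).
  2:{ intro x; split; [intro H; destruct (classic (A x)); [left|right]; auto | intros [H|[H _]]; auto]. }
  rewrite mu_add2; auto.
  - pose proof (mu_ge0 (fun x => B x /\ setC A x)
       (borel_inter _ _ HB (borel_compl _ HA))). lra.
  - apply borel_inter; auto. apply borel_compl; auto.
  - intros x H [_ H']; auto.
Qed.

End Meas.

Lemma infsum_cv s l : infinite_sum s l -> Un_cv (sum_f_R0 s) l.
Proof. intro H; exact H. Qed.
Lemma cv_infsum s l : Un_cv (sum_f_R0 s) l -> infinite_sum s l.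
Proof. intro H; exact H. Qed.

Lemma cv_const (a : R) : Un_cv (fun _ => a) a.
Proof. intros e He; exists O; intros; unfold Rdist; rewrite Rminus_diag, Rabs_R0; lra. Qed.

Lemma infsum_comb (a b : R) F G l1 l2 : infinite_sum F l1 -> infinite_sum G l2 ->
  infinite_sum (fun n => a * F n + b * G n) (a * l1 + b * l2).
Proof.
  intros H1 H2. apply cv_infsum.
  assert (Un_cv (fun n => a * sum_f_R0 F n + b * sum_f_R0 G n) (a * l1 + b * l2)).
  { apply CV_plus; apply CV_mult; auto using cv_const, infsum_cv. }
  intros e He; destruct (H e He) as [N HN]; exists N; intros n Hn.
  assert (Heq : forall k, sum_f_R0 (fun n => a * F n + b * G n) k = a * sum_f_R0 F k + b * sum_f_R0 G k).
  { induction k; simpl; [ring| rewrite IHk; ring]. }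
  rewrite Heq. apply HN; exact Hn.
Qed.

Lemma prob_comb {d} (mu m : set d -> R) (a : R) : prob_measure mu -> prob_measure m ->
  0 <= a <= 1 -> prob_measure (fun S => a * mu S + (1 - a) * m S).
Proof.
  intros [H1 [H2 H3]] [K1 [K2 K3]] Ha; split; [|split].
  - intros A HA; specialize (H1 A HA); specialize (K1 A HA); nra.
  - rewrite H2, K2; ring.
  - intros A HA HD. apply infsum_comb; auto.
Qed.

Lemma lowb_of_inf {d} (s : R) (E : set d) (mu : set d -> R) (q : R) :
  prob_measure mu -> ratio_inf s E mu q -> ratio_lowb s E mu q.
Proof.
  intros Hmu [Hub Hl] x r Hx Hr.
  set (M := mu (ball x r)). set (R0 := Rpower r s).
  assert (HR : 0 < R0) by (unfold R0, Rpower; apply exp_pos).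
  assert (HM : 0 <= M).
  { apply (mu_ge0 mu Hmu). apply borel_open. intros z Hz. unfold ball in Hz.
    exists (r - Defs.dist x z); split; [lra|]. intros w Hw. unfold ball.
    pose proof (ddist_tri x w z); lra. }
  destruct (Rle_dec (q * M) R0) as [|Hgt]; auto.
  exfalso. apply Rnot_le_lt in Hgt.
  assert (HM0 : 0 < M) by (destruct HM as [|HM]; auto; rewrite <- HM in Hgt; lra).
  set (t := R0 / M). assert (Ht : t * M = R0) by (unfold t; field; lra).
  assert (Htq : t < q) by nra.
  set (c' := (q + t) / 2).
  destruct (classic (is_upper_bound (ratio_lowb s E mu) c')) as [Hc|Hc].
  - specialize (Hl c' Hc). unfold c' in Hl. lra.
  - apply Hc. intros e He. specialize (He x r Hx Hr). fold M R0 in He.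
    apply Rnot_lt_le; intro Hlt. unfold c' in Hlt. nra.
Qed.

Lemma ball_open {d} (x : pt d) r : is_open (ball x r).
Proof.
  intros z Hz. unfold ball in Hz.
  exists (r - Defs.dist x z); split; [lra|]. intros w Hw. unfold ball.
  pose proof (ddist_tri x w z); lra.
Qed.

Lemma ball_borel {d} (x : pt d) r : borel (ball x r).
Proof. apply borel_open, ball_open. Qed.

Lemma Rpower_pos' r s : 0 < Rpower r s.
Proof. unfold Rpower; apply exp_pos. Qed.

Theorem lemma2p2 (d : nat) (s : R) (E : set d) (c p eta eps : R) (mu : set d -> R) :
  (1 <= d)%nat -> 0 <= s <= INR d ->
  borel E -> (exists x, E x) -> bdd_set E ->
  0 < c -> frostman_const d c ->
  is_phi s E p -> 0 < p ->
  0 < eta < 1 ->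
  prob_measure mu -> mu (setC E) = 0 ->
  (exists q, ratio_inf s E mu q /\ p * (1 - eta) < q) ->
  0 < eps ->
  forall h, is_Hcontent s
    (fun x => E x /\ forall y r, E y -> 0 < r -> ball y r x ->
        mu (ball y r) < (1 - eps) * Rpower r s / p) h ->
  h <= p / (c * (1 - eps + eps / eta)).
Proof.
  intros Hd Hs HE [x1 Hx1] HbE Hc Hfr Hphi Hp Heta Hmu HmuE [q [Hq Hpq]] Heps h Hh.
  set (A := fun x => E x /\ forall y r, E y -> 0 < r -> ball y r x ->
        mu (ball y r) < (1 - eps) * Rpower r s / p) in Hh.
  set (K := 1 - eps + eps / eta).
  assert (HK : eta * K = eta * (1 - eps) + eps) by (unfold K; field; lra).
  assert (HK1 : 1 < K).
  { assert (eps / eta > eps). { apply Rmult_lt_reg_l with eta; [lra|]. unfold Rdiv.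
      rewrite <- Rmult_assoc, (Rmult_comm eta eps), Rmult_assoc, Rinv_r by lra. nra. }
    unfold K; lra. }
  destruct (Rle_dec h (p / (c * K))) as [|Hgt]; [assumption|].
  exfalso. apply Rnot_le_lt in Hgt.
  assert (HpcK : 0 < p / (c * K)) by (apply Rdiv_lt_0_compat; nra).
  assert (Hh0 : 0 < h) by lra.
  set (U := fun x => exists y r, E y /\ 0 < r /\ ball y r x /\
              (1 - eps) * Rpower r s / p <= mu (ball y r)).
  assert (HU : is_open U).
  { intros z [y [r [Hy [Hr [Hz Hm]]]]].
    destruct (ball_open y r z Hz) as [e [He He']].
    exists e; split; auto. intros w Hw. exists y, r; repeat split; auto. }
  assert (HA : borel A).
  { apply borel_ext with (fun x => E x /\ setC U x).
    - apply borel_inter; auto. apply borel_compl, borel_open, HU.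
    - intro x; unfold A, U, setC; split.
      + intros [Hx HnU]; split; auto. intros y r Hy Hr Hb.
        apply Rnot_le_lt; intro Hle; apply HnU; exists y, r; auto.
      + intros [Hx HA]; split; auto. intros [y [r [Hy [Hr [Hb Hle]]]]].
        specialize (HA y r Hy Hr Hb); lra. }
  assert (HbA : bdd_set A).
  { destruct HbE as [x0 [R0 HR]]. exists x0, R0. intros x [Hx _]; auto. }
  assert (Hpos : Hmeas_pos s A).
  { exists 1, h; split; [lra|]; split; [lra|].
    intros v [cc [rr [Hr [Hcov Hsum]]]]. apply (proj1 Hh).
    exists cc, rr; repeat split; auto. intro n; apply Hr. }
  destruct (Hfr s A Hs HA HbA Hpos h Hh) as [m [Hm [HmA Hmb]]].
  set (nu := fun S => (1 - eta) * mu S + (1 - (1 - eta)) * m S).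
  assert (Hnu : prob_measure nu) by (apply prob_comb; auto; lra).
  assert (HmE : m (setC E) = 0).
  { assert (m (setC E) <= m (setC A)).
    { apply (mu_mono m Hm); try (apply borel_compl; auto).
      intros x Hx HAx; apply Hx; apply HAx. }
    pose proof (mu_ge0 m Hm (setC E) (borel_compl _ HE)). lra. }
  assert (HnuE : nu (setC E) = 0) by (unfold nu; rewrite HmuE, HmE; ring).
  set (alpha := p / (c * h)).
  assert (Halpha_def : alpha * (c * h) = p) by (unfold alpha; field; nra).
  assert (Halpha : alpha < K).
  { unfold alpha. apply Rmult_lt_reg_r with (c * h); [nra|].
    unfold Rdiv; rewrite Rmult_assoc, Rinv_l by nra.
    assert (p = (p / (c*K)) * (c * K)) by (field; nra). nra. }
  assert (Hq0 : 0 < q) by nra.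
  set (gamma := p * (1 - eta) / q).
  assert (Hgamma_def : gamma * q = p * (1 - eta)) by (unfold gamma; field; lra).
  assert (Hgamma : 0 < gamma < 1) by (split; nra).
  set (beta := Rmax gamma ((1 - eta) * (1 - eps) + eta * alpha)).
  assert (Hb1 : gamma <= beta) by apply Rmax_l.
  assert (Hb2 : (1 - eta) * (1 - eps) + eta * alpha <= beta) by apply Rmax_r.
  assert (Hb3 : beta < 1).
  { unfold beta; apply Rmax_lub_lt; [lra| nra]. }
  assert (Hqlow := lowb_of_inf s E mu q Hmu Hq).
  assert (Hlow : ratio_lowb s E nu (p / beta)).
  { intros x r Hx Hr.
    set (R0 := Rpower r s). assert (HR0 : 0 < R0) by apply Rpower_pos'.
    set (M := mu (ball x r)). set (Mm := m (ball x r)).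
    assert (HM : 0 <= M) by (apply (mu_ge0 mu Hmu), ball_borel).
    assert (HMm : 0 <= Mm) by (apply (mu_ge0 m Hm), ball_borel).
    assert (HqM : q * M <= R0) by (apply Hqlow; auto).
    assert (Hkey : p * ((1 - eta) * M + (1 - (1 - eta)) * Mm) <= beta * R0).
    { destruct (Rlt_dec M ((1 - eps) * R0 / p)) as [Hgood|Hbad].
      - assert (HMm' : Mm <= R0 / (c * h)) by (apply Hmb; auto).
        assert (E1 : p * ((1 - eps) * R0 / p) = (1 - eps) * R0) by (field; lra).
        assert (E2 : p * (R0 / (c * h)) = alpha * R0) by (unfold alpha; field; nra).
        assert (p * M <= (1 - eps) * R0) by nra.
        assert (p * Mm <= alpha * R0) by nra.
        nra.
      - apply Rnot_lt_le in Hbad.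
        assert (HMm0 : Mm = 0).
        { assert (Mm <= m (setC A)).
          { apply (mu_mono m Hm); [apply ball_borel | apply borel_compl; auto |].
            intros z Hz HAz. destruct HAz as [_ HAz].
            specialize (HAz x r Hx Hr Hz). fold R0 M in HAz. lra. }
          lra. }
        rewrite HMm0. nra. }
    change (p / beta * ((1 - eta) * M + (1 - (1 - eta)) * Mm) <= R0).
    assert (Hbeta0 : 0 < beta) by lra.
    unfold Rdiv. assert (beta * / beta = 1) by (field; lra).
    assert (0 < / beta) by (apply Rinv_0_lt_compat; lra).
    nra. }
  destruct HbE as [x0 [R0' HR0']].
  assert (HR0pos : 0 <= R0') by (pose proof (HR0' x1 Hx1); pose proof (ddist_ge0 x0 x1); lra).
  set (R1 := 2 * R0' + 1).
  assert (Hsub : forall y, E y -> ball x1 R1 y).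
  { intros y Hy. unfold ball. pose proof (ddist_tri x1 y x0).
    rewrite (ddist_sym x1 x0) in H. pose proof (HR0' y Hy). pose proof (HR0' x1 Hx1).
    unfold R1; lra. }
  assert (Hball1 : nu (ball x1 R1) = 1).
  { assert (Hsplit : nu (fun x => ball x1 R1 x \/ setC (ball x1 R1) x) = nu (ball x1 R1) + nu (setC (ball x1 R1))).
    { apply (mu_add2 nu Hnu); [apply ball_borel | apply borel_compl, ball_borel |].
      intros x H1 H2; auto. }
    rewrite (mu_ext nu (fun x => ball x1 R1 x \/ setC (ball x1 R1) x) (fun _ => True)) in Hsplit.
    2:{ intro x; split; auto. intros _. apply classic. }
    rewrite (proj1 (proj2 Hnu)) in Hsplit.
    assert (nu (setC (ball x1 R1)) <= nu (setC E)).
    { apply (mu_mono nu Hnu); try apply borel_compl; auto using ball_borel.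
      intros x Hx HEx; apply Hx, Hsub, HEx. }
    pose proof (mu_ge0 nu Hnu _ (borel_compl _ (ball_borel x1 R1))). lra. }
  assert (Hbound : bound (ratio_lowb s E nu)).
  { exists (Rpower R1 s). intros c' Hc'. specialize (Hc' x1 R1 Hx1 ltac:(unfold R1; lra)).
    rewrite Hball1 in Hc'. lra. }
  destruct (completeness _ Hbound (ex_intro _ _ Hlow)) as [Q HQ].
  assert (HQ1 : p / beta <= Q) by (apply (proj1 HQ); exact Hlow).
  assert (HQ2 : Q <= p).
  { apply (proj1 Hphi). exists nu; split; [exact Hnu| split; [exact HnuE| exact HQ]]. }
  assert (p < p / beta).
  { apply Rmult_lt_reg_r with beta; [lra|]. unfold Rdiv.
    rewrite Rmult_assoc, Rinv_l by lra. nra. }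
  lra.
Qed.
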